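(* Let $k\geq0$ and $S=sgp^+\langle a,b\mid a^kb=ba\rangle$. Then $S$ is prefix-automatic if and only if $k\leq1$.
   Context: $sgp^+\langle A\mid R\rangle$ is the free semigroup $A^+$ of nonempty words modulo the congruence generated by $R$; $a^0$ is the empty word. Automaticity: regular = accepted by a finite automaton. With $\$\notin A$, $A(2,\$)=(A\cup\{\$\})^2\setminus\{(\$,\$)\}$; $(\alpha,\beta)\delta_A^R$ is the word over $A(2,\$)$ obtained by padding the shorter word on the right with $\$$'s and reading letter pairs. For a semigroup $S$ generated by finite $A$, $\phi:A^+\to S$ canonical, $L\subseteq A^+$ regular with $\phi(L)=S$, write $\alpha=\beta$ if $\phi(\alpha)=\phi(\beta)$ and $L_a^\$=\{(\alpha,\beta)\delta^R_A:\alpha,\beta\in L,\alpha a=\beta\}$ for $a\in A\cup\{\varepsilon\}$. $S$ is automatic if some such $(A,L)$ has all $L_a^\$$ regular; prefix-automatic if some such automatic structure also has $\{(\alpha,\beta)\delta_A^R:\alpha\in L,\beta\in\mathrm{Pref}(L),\alpha=\beta\}$ regular ($\mathrm{Pref}(L)$ = prefixes of words of $L$). *)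

(* Defs.v *)
From HB Require Import structures.
From mathcomp Require Import all_boot.
Set Implicit Arguments.
Unset Strict Implicit.
Unset Printing Implicit Defensive.

Record dfa (X : finType) := Dfa {
  dfa_state : finType;
  dfa_start : dfa_state;
  dfa_final : pred dfa_state;
  dfa_trans : dfa_state -> X -> dfa_state }.

Definition dfa_accepts (X : finType) (M : dfa X) (w : seq X) : bool :=
  @dfa_final X M (foldl (@dfa_trans X M) (@dfa_start X M) w).

Definition regular (X : finType) (L : seq X -> Prop) : Prop :=
  exists M : dfa X, forall w, dfa_accepts M w <-> L w.

Inductive pcong (Sigma : eqType) (R : seq (seq Sigma * seq Sigma))
  : seq Sigma -> seq Sigma -> Prop :=
| pcong_refl u : pcong R u u
| pcong_sym u v : pcong R u v -> pcong R v u
| pcong_trans u v w : pcong R u v -> pcong R v w -> pcong R u w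
| pcong_rel (x y : seq Sigma) (r : seq Sigma * seq Sigma) :
    r \in R -> pcong R (x ++ r.1 ++ y) (x ++ r.2 ++ y).

(* The padding symbol $ is None; letters of A are Some _. *)
Definition pad (B : Type) (al be : seq B) : seq (option B * option B) :=
  zip (map Some al ++ nseq (size be - size al) None)
      (map Some be ++ nseq (size al - size be) None).

(* A finite generating set of S = sgp^+<Sigma | R> is a finite type B
   with a map g : B -> Sigma^+ choosing a (nonempty) representative word
   of each generator; distinct generators are distinct elements of S.
   phi : B^+ -> S is then alpha |-> class of (flatten (map g alpha)). *)
Definition phi (Sigma : Type) (B : Type) (g : B -> seq Sigma) (al : seq B) :=
  flatten (map g al).

Definition gen_set (Sigma : eqType) (R : seq (seq Sigma * seq Sigma))
  (B : finType) (g : B -> seq Sigma) : Prop :=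
  (forall x, g x <> [::]) /\ (forall x y, pcong R (g x) (g y) -> x = y).

(* L_c^$ for c in A \cup {epsilon} (c = None is epsilon) *)
Definition Lmult (Sigma : eqType) (R : seq (seq Sigma * seq Sigma))
  (B : finType) (g : B -> seq Sigma) (L : seq B -> Prop) (c : option B)
  : seq (option B * option B) -> Prop :=
  fun p => exists al be, [/\ L al, L be,
    pcong R (phi g (al ++ oapp (fun x => [:: x]) [::] c)) (phi g be)
    & p = pad al be].

Definition auto_struct (Sigma : eqType) (R : seq (seq Sigma * seq Sigma))
  (B : finType) (g : B -> seq Sigma) (L : seq B -> Prop) : Prop :=
  [/\ gen_set R g,
      (forall al, L al -> al <> [::]),
      regular L,
      (forall w : seq Sigma, w <> [::] ->
         exists al, L al /\ pcong R (phi g al) w)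
    & forall c : option B, regular (Lmult R g L c)].

Definition automatic (Sigma : eqType) (R : seq (seq Sigma * seq Sigma)) : Prop :=
  exists (B : finType) (g : B -> seq Sigma) (L : seq B -> Prop),
    auto_struct R g L.

Definition Lpref (Sigma : eqType) (R : seq (seq Sigma * seq Sigma))
  (B : finType) (g : B -> seq Sigma) (L : seq B -> Prop)
  : seq (option B * option B) -> Prop :=
  fun p => exists al be, [/\ L al, (exists ga, L ga /\ prefix be ga),
    pcong R (phi g al) (phi g be) & p = pad al be].

Definition prefix_automatic (Sigma : eqType) (R : seq (seq Sigma * seq Sigma))
  : Prop :=
  exists (B : finType) (g : B -> seq Sigma) (L : seq B -> Prop),
    auto_struct R g L /\ regular (Lpref R g L).

Inductive ab := La | Lb.
Definition ab_to_bool (x : ab) : bool := if x is Lb then true else false.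
Definition bool_to_ab (x : bool) : ab := if x then Lb else La.
Lemma ab_boolK : cancel ab_to_bool bool_to_ab. Proof. by case. Qed.
HB.instance Definition _ := Finite.copy ab (can_type ab_boolK).

Definition relk (k : nat) : seq (seq ab * seq ab) :=
  [:: (nseq k La ++ [:: Lb], [:: Lb; La])].

(* Main.v *)
Require Import Defs.
From mathcomp Require Import all_boot zify.
Set Implicit Arguments.
Unset Strict Implicit.
Unset Printing Implicit Defensive.

Section Pc.
Variable k : nat.
Local Notation R := (relk k).

Lemma pcong_ctx u v x y : pcong R u v -> pcong R (x ++ u ++ y) (x ++ v ++ y).
Proof.
elim=> {u v} [u|u v _ IH|u v w _ IH1 _ IH2|x0 y0 r Hr].
- exact: pcong_refl.
- exact: pcong_sym.
- exact: pcong_trans IH2.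
- have -> : x ++ (x0 ++ r.1 ++ y0) ++ y = (x ++ x0) ++ r.1 ++ (y0 ++ y) by rewrite !catA.
  have -> : x ++ (x0 ++ r.2 ++ y0) ++ y = (x ++ x0) ++ r.2 ++ (y0 ++ y) by rewrite !catA.
  exact: pcong_rel.
Qed.

Lemma pcong_catl u v y : pcong R u v -> pcong R (u ++ y) (v ++ y).
Proof. by move/(pcong_ctx [::] y). Qed.
Lemma pcong_catr u v x : pcong R u v -> pcong R (x ++ u) (x ++ v).
Proof. by move/(pcong_ctx x [::]); rewrite !cats0. Qed.

Lemma rel_ba : pcong R [:: Lb; La] (nseq k La ++ [:: Lb]).
Proof.
apply: pcong_sym.
have := @pcong_rel _ R [::] [::] (nseq k La ++ [:: Lb], [:: Lb; La]).
by rewrite /= !cats0 mem_seq1 eqxx; apply.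
Qed.

Lemma b_an n : pcong R (Lb :: nseq n La) (nseq (k * n) La ++ [:: Lb]).
Proof.
elim: n => [|n IH]; first by rewrite muln0; exact: pcong_refl.
have -> : Lb :: nseq n.+1 La = [:: Lb; La] ++ nseq n La by [].
apply: pcong_trans (pcong_catl (nseq n La) rel_ba) _.
rewrite -catA /=.
apply: pcong_trans (pcong_catr (nseq k La) IH) _.
by rewrite catA -nseqD mulnS; exact: pcong_refl.
Qed.

Lemma bm_a m : pcong R (nseq m Lb ++ [:: La]) (nseq (k ^ m) La ++ nseq m Lb).
Proof.
elim: m => [|m IH]; first by rewrite expn0 cats0; exact: pcong_refl.
rewrite /= -cat1s.
apply: pcong_trans (pcong_catr [:: Lb] IH) _.
rewrite catA.
apply: pcong_trans (pcong_catl (nseq m Lb) (b_an _)) _.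
by rewrite -catA expnS; exact: pcong_refl.
Qed.

Fixpoint Nv (w : seq ab) : nat :=
  match w with [::] => 0 | La :: w => (Nv w).+1 | Lb :: w => k * Nv w end.
Fixpoint mv (w : seq ab) : nat :=
  match w with [::] => 0 | La :: w => mv w | Lb :: w => (mv w).+1 end.

Lemma mv_cat u v : mv (u ++ v) = mv u + mv v.
Proof. by elim: u => [|[] u IH] //=; rewrite IH. Qed.
Lemma Nv_cat u v : Nv (u ++ v) = Nv u + k ^ (mv u) * Nv v.
Proof.
elim: u => [|[] u IH] /=; first by rewrite mul1n.
- by rewrite IH addSn.
- by rewrite IH mulnDr expnS mulnA.
Qed.

Lemma pcong_val u v : pcong R u v -> Nv u = Nv v /\ mv u = mv v.
Proof.
elim=> {u v} [u|u v _ [-> ->]|u v w _ [-> ->] _ [-> ->]|x y r] //.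
rewrite mem_seq1 => /eqP -> /=.
rewrite !Nv_cat !mv_cat /=.
have -> : mv (nseq k La) = 0 by elim: (k) => //.
have -> : Nv (nseq k La) = k by elim: (k) => //= n ->.
split; last by lia.
congr (_ + _ * _); rewrite expn1; lia.
Qed.

Definition nf n m := nseq n La ++ nseq m Lb.
Lemma Nv_nf n m : Nv (nf n m) = n.
Proof.
rewrite /nf Nv_cat; have -> : Nv (nseq m Lb) = 0 by elim: m => //= m ->; rewrite muln0.
by rewrite muln0 addn0; elim: n => //= n ->.
Qed.
Lemma mv_nf n m : mv (nf n m) = m.
Proof.
rewrite /nf mv_cat; have -> : mv (nseq n La) = 0 by elim: n.
by have -> : mv (nseq m Lb) = m by elim: m => //= m ->.
Qed.

Lemma to_nf w : w <> [::] -> exists n m, 0 < n + m /\ pcong R w (nf n m).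
Proof.
elim: w => // x w IH _.
case: w IH => [_|y w IH].
  case: x; [exists 1, 0 | exists 0, 1]; split => //; exact: pcong_refl.
have [n [m [Hnm H]]] := IH ltac:(done).
case: x.
- exists n.+1, m; split => //.
  exact: (pcong_catr [:: La] H).
- exists (k * n), m.+1; split; first by rewrite addnS.
  apply: pcong_trans (pcong_catr [:: Lb] H) _.
  rewrite /nf /= -cat1s catA -/(nseq 1 Lb).
  have := pcong_catl (nseq m Lb) (b_an n); rewrite -catA /= => H2.
  by apply: pcong_trans H2 _; rewrite -catA; exact: pcong_refl.
Qed.
End Pc.

Section Comb.
Variable X : finType.

Definition eps_dfa : dfa X := @Dfa X bool true id (fun _ _ => false).

Lemma eps_dfaP w : dfa_accepts eps_dfa w <-> w = [::].
Proof.
rewrite /dfa_accepts /=; case: w => [|x w] //=.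
have H : forall w0 : seq X, foldl (fun _ _ => false) false w0 = false by elim.
by rewrite H.
Qed.

Definition nhd (x : X) (v : seq X) := if v is y :: _ then y != x else true.

Section M.
Variable M : dfa X.
Let S := dfa_state M.

Definition once_trans (x : X) (s : option (option S)) (y : X) : option (option S) :=
  match s with
  | None => if y == x then Some (Some (@dfa_start X M)) else Some None
  | Some None => Some None
  | Some (Some s) => Some (Some (@dfa_trans X M s y))
  end.
Definition once_fin (s : option (option S)) :=
  if s is Some (Some s) then @dfa_final X M s else false.
Definition once_dfa x : dfa X := @Dfa X (option (option S)) None once_fin (once_trans x).

Lemma once_run1 x w s : foldl (once_trans x) (Some (Some s)) w = Some (Some (foldl (@dfa_trans _ M) s w)).
Proof. by elim: w s => //= y w IH s; rewrite IH. Qed.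
Lemma once_run0 x w : foldl (once_trans x) (Some None) w = Some None.
Proof. by elim: w. Qed.

Lemma once_dfaP x w : dfa_accepts (once_dfa x) w <-> exists v, w = x :: v /\ dfa_accepts M v.
Proof.
rewrite /dfa_accepts /=; case: w => [|y w] /=; first by split => // [[v []]].
case: eqP => [->|ne].
- by rewrite once_run1 /=; split => [H|[v [[<-] H]]]; [exists w|].
- rewrite once_run0 /=; split => // [[v [[E] _]]]; by case: ne.
Qed.

Definition star_trans (x : X) (s : option S) (y : X) : option S :=
  match s with
  | None => if y == x then None else Some (@dfa_trans X M (@dfa_start X M) y)
  | Some s => Some (@dfa_trans X M s y)
  end.
Definition star_fin (s : option S) :=
  if s is Some s then @dfa_final X M s else @dfa_final X M (@dfa_start X M).
Definition star_dfa x : dfa X := @Dfa X (option S) None star_fin (star_trans x).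

Lemma star_run1 x w s : foldl (star_trans x) (Some s) w = Some (foldl (@dfa_trans _ M) s w).
Proof. by elim: w s => //= y w IH s; rewrite IH. Qed.

Lemma star_dfaP x w : dfa_accepts (star_dfa x) w <->
  exists n v, [/\ w = nseq n x ++ v, nhd x v & dfa_accepts M v].
Proof.
rewrite /dfa_accepts /=; elim: w => [|y w IH] /=.
  split => [H|[n [v [E _ H]]]]; first by exists 0, [::].
  by case: n E => [|n] //; case: v H => //= _ _.
case: eqP => [->|ne].
- rewrite IH; split => [[n [v [E N H]]]|[n [v [E N H]]]].
    by exists n.+1, v; rewrite E.
  case: n E => [|n] /= E.
    by rewrite -E /= eqxx in N.
  by case: E => E; exists n, v.
- rewrite star_run1 /=; split => [H|[n [v [E N H]]]].
    exists 0, (y :: w); split => //=; exact/eqP.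
  case: n E => [|n] /= E; first by rewrite -E in H.
  by case: E => E; case: ne.
Qed.
End M.

Definition union_dfa (M1 M2 : dfa X) : dfa X :=
  @Dfa X (dfa_state M1 * dfa_state M2)%type (@dfa_start X M1, @dfa_start X M2)
    (fun s => @dfa_final X M1 s.1 || @dfa_final X M2 s.2)
    (fun s y => (@dfa_trans X M1 s.1 y, @dfa_trans X M2 s.2 y)).

Lemma union_dfaP M1 M2 w : dfa_accepts (union_dfa M1 M2) w <-> dfa_accepts M1 w \/ dfa_accepts M2 w.
Proof.
rewrite /dfa_accepts /=.
have -> : forall s1 s2, foldl (fun s y => (@dfa_trans X M1 s.1 y, @dfa_trans X M2 s.2 y)) (s1, s2) w
   = (foldl (@dfa_trans _ M1) s1 w, foldl (@dfa_trans _ M2) s2 w).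
  by elim: w => //= y w IH s1 s2; rewrite IH.
by split => [/orP|/orP].
Qed.

End Comb.

Lemma pad_cons (T : Type) (x y : T) u v : pad (x :: u) (y :: v) = (Some x, Some y) :: pad u v.
Proof. by rewrite /pad /= !subSS. Qed.
Lemma pad_nil_l (T : Type) (v : seq T) : pad [::] v = map (fun y => (None, Some y)) v.
Proof. by rewrite /pad /= subn0; elim: v => //= y v <-. Qed.
Lemma pad_nil_r (T : Type) (u : seq T) : pad u [::] = map (fun x => (Some x, None)) u.
Proof. by rewrite /pad /= subn0 cats0; elim: u => //= y v <-. Qed.
Lemma pad_nseq (T : Type) n (x y : T) u v :
  pad (nseq n x ++ u) (nseq n y ++ v) = nseq n (Some x, Some y) ++ pad u v.
Proof. by elim: n => //= n IH; rewrite pad_cons IH. Qed.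

Notation X2 := (option ab * option ab)%type.
Definition AA : X2 := (Some La, Some La).
Definition BB : X2 := (Some Lb, Some Lb).
Definition BA : X2 := (Some Lb, Some La).
Definition NA : X2 := (None, Some La).
Definition NB : X2 := (None, Some Lb).

Lemma nseqS1 (T : Type) n (x : T) : nseq n.+1 x = nseq n x ++ [:: x].
Proof. by rewrite -addn1 nseqD. Qed.

Lemma padE n m : pad (nf n m) (nf n m) = nseq n AA ++ nseq m BB.
Proof.
rewrite /nf pad_nseq -[nseq m Lb]cats0 pad_nseq pad_nil_l cats0 //.
Qed.
Lemma padB n m : pad (nf n m) (nf n m.+1) = nseq n AA ++ nseq m BB ++ [:: NB].
Proof.
by rewrite /nf pad_nseq nseqS1 -[nseq m Lb in X in pad X _]cats0 pad_nseq pad_nil_l.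
Qed.
Lemma padA0 n : pad (nf n 0) (nf n.+1 0) = nseq n AA ++ [:: NA].
Proof.
by rewrite /nf !cats0 nseqS1 -[nseq n La in X in pad X _]cats0 pad_nseq pad_nil_l.
Qed.
Lemma padA1 n m : pad (nf n m.+1) (nf n.+1 m.+1) = nseq n AA ++ BA :: nseq m BB ++ [:: NB].
Proof.
rewrite /nf [nseq n.+1 La]nseqS1 -catA pad_nseq /= pad_cons.
have -> : Lb :: nseq m Lb = nseq m Lb ++ [:: Lb] by rewrite -nseqS1.
by rewrite -[nseq m Lb in X in pad X _]cats0 pad_nseq pad_nil_l.
Qed.

Section Acc.
Variable X : finType.
Lemma eps_acc : dfa_accepts (@eps_dfa X) [::].
Proof. exact/eps_dfaP. Qed.
Lemma once_acc (M : dfa X) x v : dfa_accepts M v -> dfa_accepts (once_dfa M x) (x :: v).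
Proof. by move=> H; apply/once_dfaP; exists v. Qed.
Lemma star_acc (M : dfa X) x n v : dfa_accepts M v -> nhd x v -> dfa_accepts (star_dfa M x) (nseq n x ++ v).
Proof. by move=> H N; apply/star_dfaP; exists n, v. Qed.
End Acc.

Definition gid (x : ab) : seq ab := [:: x].
Lemma phi_gid al : phi gid al = al.
Proof. by rewrite /phi; elim: al => //= x al ->. Qed.

Definition isnf (al : seq ab) := exists n m, 0 < n + m /\ al = nf n m.

Section Pos.
Variable k : nat.
Local Notation R := (relk k).

Lemma pcong_nf w : w <> [::] -> pcong R w (nf (Nv k w) (mv w)).
Proof.
move=> /(to_nf k) [n [m [_ H]]].
have [E1 E2] := pcong_val H.
by rewrite E1 E2 Nv_nf mv_nf.
Qed.

Lemma Lmult_nf c p : Lmult R gid isnf c p <->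
  exists n m, 0 < n + m /\
   p = pad (nf n m) (nf (Nv k (nf n m ++ oapp (fun x => [:: x]) [::] c))
                        (mv (nf n m ++ oapp (fun x => [:: x]) [::] c))).
Proof.
split.
- move=> [al [be [[n [m [Hnm ->]]] [n' [m' [_ ->]]] H ->]]].
  rewrite !phi_gid in H.
  have [E1 E2] := pcong_val H.
  exists n, m; split => //; by rewrite E1 E2 Nv_nf mv_nf.
- move=> [n [m [Hnm ->]]].
  set w := (nf n m ++ _).
  have Hw : w <> [::] by move=> E; move: (congr1 size E); rewrite /w size_cat /nf size_cat !size_nseq /=; lia.
  exists (nf n m), (nf (Nv k w) (mv w)); split.
  + by exists n, m.
  + exists (Nv k w), (mv w); split => //.
    rewrite /w Nv_cat mv_cat Nv_nf mv_nf; lia.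
  + by rewrite !phi_gid; exact: pcong_nf.
  + by [].
Qed.

Lemma Lpref_nf p : Lpref R gid isnf p <-> exists n m, 0 < n + m /\ p = pad (nf n m) (nf n m).
Proof.
split.
- move=> [al [be [[n [m [Hnm ->]]] [ga [[n1 [m1 [_ ->]]] Hp]] H ->]]].
  rewrite !phi_gid in H.
  move: Hp; rewrite prefixE /nf take_cat size_nseq => /eqP E.
  have [n2 [m2 Ebe]] : exists n2 m2, be = nf n2 m2.
    move: E; case: ifP => h E.
      by exists (size be), 0; rewrite /nf cats0 -{1}E take_nseq // ltnW.
    exists n1, (minn (size be - n1) m1).
    rewrite -{1}E /nf; congr (_ ++ _).
    case: (leqP (size be - n1) m1) => h2.
      by rewrite take_nseq // (minn_idPl h2).
    by rewrite take_oversize ?size_nseq ?(minn_idPr (ltnW h2)) // ltnW.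
  rewrite Ebe in H *.
  have [E1 E2] := pcong_val H.
  rewrite !Nv_nf !mv_nf in E1 E2; rewrite -E1 -E2.
  by exists n, m.
- move=> [n [m [Hnm ->]]].
  exists (nf n m), (nf n m); split.
  + by exists n, m.
  + by exists (nf n m); split; [exists n, m | exact: prefix_refl].
  + exact: pcong_refl.
  + by [].
Qed.

Hypothesis Hk : k <= 1.

Definition dL : dfa ab := union_dfa (once_dfa (star_dfa (star_dfa (eps_dfa ab) Lb) La) La)
                                    (once_dfa (star_dfa (eps_dfa ab) Lb) Lb).
Lemma dLP al : dfa_accepts dL al <-> isnf al.
Proof.
split.
- case/union_dfaP.
  + move=> /once_dfaP [v [-> /star_dfaP [n [v1 [-> _ /star_dfaP [m [v2 [-> _ /eps_dfaP ->]]]]]]]].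
    by exists n.+1, m; rewrite /nf cats0.
  + move=> /once_dfaP [v [-> /star_dfaP [m [v2 [-> _ /eps_dfaP ->]]]]].
    by exists 0, m.+1; rewrite /nf cats0.
- move=> [[|n] [m [Hnm ->]]]; apply/union_dfaP.
  + case: m Hnm => // m _; right; rewrite /nf /=.
    apply: once_acc; rewrite -[nseq m Lb]cats0; apply: star_acc => //; exact: eps_acc.
  + left; rewrite /nf /=; apply: once_acc; apply: star_acc; last by clear Hnm; case: m.
    rewrite -[nseq m Lb]cats0; apply: star_acc => //; exact: eps_acc.
Qed.

End Pos.


Definition E2 : dfa X2 := eps_dfa _.

Definition dE : dfa X2 := union_dfa (once_dfa (star_dfa (star_dfa E2 BB) AA) AA)
                                    (once_dfa (star_dfa E2 BB) BB).
Lemma dEP p : dfa_accepts dE p <-> exists n m, 0 < n + m /\ p = pad (nf n m) (nf n m).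
Proof.
split.
- case/union_dfaP.
  + move=> /once_dfaP [v [-> /star_dfaP [n [v1 [-> _ /star_dfaP [m [v2 [-> _ /eps_dfaP ->]]]]]]]].
    by exists n.+1, m; rewrite padE cats0.
  + move=> /once_dfaP [v [-> /star_dfaP [m [v2 [-> _ /eps_dfaP ->]]]]].
    by exists 0, m.+1; rewrite padE cats0.
- move=> [[|n] [m [Hnm ->]]]; rewrite padE; apply/union_dfaP.
  + case: m Hnm => // m _; right => /=.
    apply: once_acc; rewrite -[nseq m BB]cats0; apply: star_acc => //; exact: eps_acc.
  + left => /=; apply: once_acc; apply: star_acc; last by clear Hnm; case: m.
    rewrite -[nseq m BB]cats0; apply: star_acc => //; exact: eps_acc.
Qed.

Definition dB : dfa X2 := union_dfa (once_dfa (star_dfa (star_dfa (once_dfa E2 NB) BB) AA) AA)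
                                    (once_dfa (star_dfa (once_dfa E2 NB) BB) BB).
Lemma dBP p : dfa_accepts dB p <-> exists n m, 0 < n + m /\ p = pad (nf n m) (nf n m.+1).
Proof.
split.
- case/union_dfaP.
  + move=> /once_dfaP [v [-> /star_dfaP [n [v1 [-> _ /star_dfaP [m [v2 [-> _ /once_dfaP [v3 [-> /eps_dfaP ->]]]]]]]]]].
    by exists n.+1, m; rewrite padB.
  + move=> /once_dfaP [v [-> /star_dfaP [m [v2 [-> _ /once_dfaP [v3 [-> /eps_dfaP ->]]]]]]].
    by exists 0, m.+1; rewrite padB.
- move=> [[|n] [m [Hnm ->]]]; rewrite padB; apply/union_dfaP.
  + case: m Hnm => // m _; right => /=.
    apply: once_acc; apply: star_acc => //; apply: once_acc; exact: eps_acc.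
  + left => /=; apply: once_acc; apply: star_acc; last by clear Hnm; case: m.
    apply: star_acc => //; apply: once_acc; exact: eps_acc.
Qed.

Definition dA1 : dfa X2 := union_dfa (once_dfa (star_dfa (once_dfa E2 NA) AA) AA)
                                     (star_dfa (once_dfa (star_dfa (once_dfa E2 NB) BB) BA) AA).
Lemma dA1P p : dfa_accepts dA1 p <-> exists n m, 0 < n + m /\ p = pad (nf n m) (nf (n + 1 ^ m) m).
Proof.
split.
- case/union_dfaP.
  + move=> /once_dfaP [v [-> /star_dfaP [n [v1 [-> _ /once_dfaP [v3 [-> /eps_dfaP ->]]]]]]].
    by exists n.+1, 0; rewrite exp1n addn1 padA0.
  + move=> /star_dfaP [n [v [-> _ /once_dfaP [v1 [-> /star_dfaP [m [v2 [-> _ /once_dfaP [v3 [-> /eps_dfaP ->]]]]]]]]]].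
    by exists n, m.+1; rewrite exp1n addn1 padA1 addnS.
- move=> [n [[|m] [Hnm ->]]]; rewrite exp1n addn1; apply/union_dfaP.
  + case: n Hnm => // n _; left; rewrite padA0 /=.
    apply: once_acc; apply: star_acc => //; apply: once_acc; exact: eps_acc.
  + right; rewrite padA1; apply: star_acc => //; apply: once_acc.
    apply: star_acc => //; apply: once_acc; exact: eps_acc.
Qed.

Definition dA0 : dfa X2 := union_dfa (once_dfa (star_dfa (once_dfa E2 NA) AA) AA)
                                     (star_dfa (once_dfa (star_dfa E2 BB) BB) AA).
Lemma dA0P p : dfa_accepts dA0 p <-> exists n m, 0 < n + m /\ p = pad (nf n m) (nf (n + 0 ^ m) m).
Proof.
split.
- case/union_dfaP.
  + move=> /once_dfaP [v [-> /star_dfaP [n [v1 [-> _ /once_dfaP [v3 [-> /eps_dfaP ->]]]]]]].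
    by exists n.+1, 0; rewrite expn0 addn1 padA0.
  + move=> /star_dfaP [n [v [-> _ /once_dfaP [v1 [-> /star_dfaP [m [v2 [-> _ /eps_dfaP ->]]]]]]]].
    by exists n, m.+1; rewrite exp0n // addn0 padE cats0 addnS.
- move=> [n [[|m] [Hnm ->]]]; apply/union_dfaP.
  + rewrite expn0 addn1; case: n Hnm => // n _; left; rewrite padA0 /=.
    apply: once_acc; apply: star_acc => //; apply: once_acc; exact: eps_acc.
  + right; rewrite exp0n // addn0 padE; apply: star_acc; last by case: (m).
    apply: once_acc; have := @star_acc _ E2 BB m [::] (eps_acc _) isT; by rewrite cats0.
Qed.

Lemma exeq (F G : nat -> nat -> seq X2) p : (forall n m, F n m = G n m) ->
  (exists n m, 0 < n + m /\ p = F n m) <-> (exists n m, 0 < n + m /\ p = G n m).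
Proof.
move=> H; split => [[n [m [h ->]]]|[n [m [h ->]]]]; exists n, m; split => //.
Qed.

Lemma pos k : k <= 1 -> prefix_automatic (relk k).
Proof.
move=> Hk.
exists ab, gid, isnf; split; last first.
  exists dE => p; apply: iff_trans (dEP p) (iff_sym (Lpref_nf _ _)).
split.
- split => // x y /pcong_val [_]; by case: x; case: y.
- by move=> al [n [m [h ->]]]; rewrite /nf; case: n h => [|n]; case: m.
- by exists dL => w; exact: dLP.
- move=> w /(to_nf k) [n [m [h H]]]; exists (nf n m); split; first by exists n, m.
  by rewrite phi_gid; exact: pcong_sym.
- case=> [[]|].
  + exists (if k == 0 then dA0 else dA1) => p.
    apply: iff_trans _ (iff_sym (Lmult_nf _ _ _)).
    case: eqP => [k0|k1].
      apply: iff_trans (dA0P p) _; apply: exeq => n m.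
      by rewrite Nv_cat mv_cat Nv_nf mv_nf /= k0 muln1 addn0.
    have k1' : k = 1 by lia.
    apply: iff_trans (dA1P p) _; apply: exeq => n m.
    by rewrite Nv_cat mv_cat Nv_nf mv_nf /= k1' muln1 addn0.
  + exists dB => p.
    apply: iff_trans _ (iff_sym (Lmult_nf _ _ _)).
    apply: iff_trans (dBP p) _; apply: exeq => n m.
    by rewrite Nv_cat mv_cat Nv_nf mv_nf /= !muln0 addn0 addn1.
  + exists dE => p.
    apply: iff_trans _ (iff_sym (Lmult_nf _ _ _)).
    apply: iff_trans (dEP p) _; apply: exeq => n m.
    by rewrite /= cats0 Nv_nf mv_nf.
Qed.

Lemma short_cont (X : finType) (M : dfa X) n : forall q w, size w <= n ->
  dfa_final (foldl (@dfa_trans X M) q w) ->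
  exists z, size z < #|dfa_state M| /\ dfa_final (foldl (@dfa_trans X M) q z).
Proof.
elim: n => [|n IH] q w Hw Hf.
  case: w Hw Hf => // _ Hf; exists [::]; split => //.
  by apply/card_gt0P; exists q.
case: (ltnP (size w) #|dfa_state M|) => hs; first by exists w.
set s := [seq foldl (@dfa_trans X M) q (take i w) | i <- iota 0 (size w).+1].
have : ~~ uniq s.
  apply/negP => /card_uniqP Hc; have := max_card (mem s).
  rewrite Hc size_map size_iota; lia.
case/(uniqPn q) => i [j [ij js E]].
rewrite size_map size_iota in js.
rewrite !(nth_map 0) ?size_iota // ?nth_iota // in E; try lia.
apply: (IH q (take i w ++ drop j w)).
- rewrite size_cat size_take size_drop; case: ifP => h; lia.
- by rewrite foldl_cat !add0n in E *; rewrite E -foldl_cat cat_take_drop.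
Qed.

Lemma pmap_some (T : Type) (s : seq T) : pmap id (map Some s) = s.
Proof. by elim: s => //= x s ->. Qed.
Lemma pmap_none (T : Type) d : pmap id (nseq d (@None T)) = [::].
Proof. by elim: d. Qed.

Lemma pmap_take_pad (T : Type) (al : seq T) d t :
  pmap id (take t (map Some al ++ nseq d None)) = take t al.
Proof.
rewrite take_cat size_map; case: ifP => h.
  by rewrite -map_take pmap_some.
rewrite pmap_cat pmap_some.
have -> : forall n d0, pmap id (take n (nseq d0 (@None T))) = [::].
  by move=> n d0; elim: d0 n => [|d0 IH] [|n] //=.
by rewrite cats0 take_oversize // leqNgt h.
Qed.

Lemma unzip1_pad (T : Type) (al be : seq T) :
  unzip1 (pad al be) = map Some al ++ nseq (size be - size al) None.
Proof. by rewrite /pad unzip1_zip // !size_cat !size_map !size_nseq; lia. Qed.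
Lemma unzip2_pad (T : Type) (al be : seq T) :
  unzip2 (pad al be) = map Some be ++ nseq (size al - size be) None.
Proof. by rewrite /pad unzip2_zip // !size_cat !size_map !size_nseq; lia. Qed.

Lemma pad_prefix (T : Type) (al be al' be' : seq T) t z :
  take t (pad al be) ++ z = pad al' be' ->
  exists r r', [/\ al' = take t al ++ r, be' = take t be ++ r', size r <= size z & size r' <= size z].
Proof.
move=> E.
exists (pmap id (unzip1 z)), (pmap id (unzip2 z)); split.
- have := congr1 (fun s => pmap id (unzip1 s)) E => /=.
  rewrite unzip1_pad pmap_cat pmap_some /unzip1 map_cat map_take -/(unzip1 _) unzip1_pad.
  by rewrite pmap_cat pmap_take_pad pmap_none cats0 => <-.
- have := congr1 (fun s => pmap id (unzip2 s)) E => /=.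
  rewrite unzip2_pad pmap_cat pmap_some /unzip2 map_cat map_take -/(unzip2 _) unzip2_pad.
  by rewrite pmap_cat pmap_take_pad pmap_none cats0 => <-.
- by rewrite size_pmap (leq_trans (count_size _ _)) // size_map.
- by rewrite size_pmap (leq_trans (count_size _ _)) // size_map.
Qed.

Section Vals.
Variable k : nat.
Hypothesis Hk : 0 < k.

Lemma mv_size w : mv w <= size w.
Proof. by elim: w => [|[] w IH] //=; lia. Qed.

Lemma Nv_bound w : Nv k w <= size w * k ^ (mv w).
Proof.
elim: w => [|[] w IH] //=.
- have : 0 < k ^ mv w by rewrite expn_gt0 Hk.
  lia.
- rewrite expnS; nia.
Qed.

Lemma Nv_bound2 w E : size w <= E -> Nv k w <= E * k ^ E.
Proof.
move=> h; apply: (leq_trans (Nv_bound w)); apply: leq_mul => //.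
apply: leq_pexp2l => //; exact: leq_trans (mv_size w) h.
Qed.

Definition wt w := Nv k w + mv w.

Lemma wt_cat u v : wt u + wt v <= wt (u ++ v).
Proof.
rewrite /wt Nv_cat mv_cat.
have : 0 < k ^ mv u by rewrite expn_gt0 Hk.
nia.
Qed.

Lemma wt_pos w : w <> [::] -> 0 < wt w.
Proof. by case: w => [|[] w] //= _; rewrite /wt /=; lia. Qed.

Lemma count_bound (E : nat) (Q : seq ab) (ps : seq (seq ab)) :
  uniq [seq (Nv k p, mv p) | p <- ps] ->
  (forall p, p \in ps -> exists X Y, [/\ size X <= E, size Y <= E,
      Nv k (p ++ X) = Nv k (Q ++ Y) & mv (p ++ X) = mv (Q ++ Y)]) ->
  size ps <= (E * k ^ E).+1 * (E * k ^ E).+1 * E.+1 * E.+1.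
Proof.
move=> U H.
pose A := (E * k ^ E).+1.
pose f := fun (x : 'I_A * 'I_A * 'I_E.+1 * 'I_E.+1) =>
  let: (a, b, c, d) := x in
  ((Nv k Q + k ^ (mv Q) * b) - k ^ ((mv Q + d) - c) * a, (mv Q + d) - c).
have -> : (E * k ^ E).+1 * (E * k ^ E).+1 * E.+1 * E.+1 = size (codom f).
  by rewrite size_codom !card_prod !card_ord.
rewrite -(size_map (fun p => (Nv k p, mv p))).
apply: uniq_leq_size => // xy /mapP [p Hp ->].
have [X [Y [hX hY E1 E2]]] := H p Hp.
have hNX : Nv k X < A by rewrite ltnS; exact: Nv_bound2.
have hNY : Nv k Y < A by rewrite ltnS; exact: Nv_bound2.
have hmX : mv X < E.+1 by rewrite ltnS; exact: leq_trans (mv_size X) hX.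
have hmY : mv Y < E.+1 by rewrite ltnS; exact: leq_trans (mv_size Y) hY.
have -> : (Nv k p, mv p) = f (Ordinal hNX, Ordinal hNY, Ordinal hmX, Ordinal hmY).
  rewrite /f /=.
  rewrite !mv_cat in E2; rewrite !Nv_cat in E1.
  have em : mv p = mv Q + mv Y - mv X by lia.
  rewrite -em; congr (_, _).
  move: E1; set u := k ^ mv p * Nv k X; set v := k ^ mv Q * Nv k Y; lia.
exact: codom_f.
Qed.

End Vals.

Section Str.
Variable k : nat.
Hypothesis Hk : 0 < k.
Local Notation R := (relk k).
Variables (B : finType) (g : B -> seq ab) (L : seq B -> Prop).
Hypothesis gne : forall x, g x <> [::].

Definition cmax := \max_(x : B) size (g x).
Lemma phi_cat u v : phi g (u ++ v) = phi g u ++ phi g v.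
Proof. by rewrite /phi map_cat flatten_cat. Qed.
Lemma phi1 x : phi g [:: x] = g x.
Proof. by rewrite /phi /= cats0. Qed.
Lemma phi_cons x u : phi g (x :: u) = g x ++ phi g u.
Proof. by []. Qed.
Lemma size_phi u : size (phi g u) <= size u * cmax.
Proof.
elim: u => [|x u IH] //=; rewrite phi_cons size_cat mulSn leq_add //.
rewrite /cmax; exact: (@leq_bigmax B (fun y => size (g y)) x).

Qed.
Lemma phi_ne u : u <> [::] -> phi g u <> [::].
Proof. case: u => // x u _; rewrite phi_cons; have := @gne x; by case: (g x). Qed.
Lemma wt_phi u : size u <= wt k (phi g u).
Proof.
elim: u => [|x u IH] //; rewrite phi_cons /=.
apply: leq_trans (wt_cat Hk _ _); rewrite -add1n leq_add //.
exact: wt_pos.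
Qed.

Lemma wt_take al t1 t2 : t1 < t2 -> t2 <= size al ->
  wt k (phi g (take t1 al)) < wt k (phi g (take t2 al)).
Proof.
move=> h1 h2.
have -> : take t2 al = take t1 al ++ take (t2 - t1) (drop t1 al).
  by rewrite -takeD subnKC // ltnW.
rewrite phi_cat; apply: leq_trans (wt_cat Hk _ _); rewrite -addn1 leq_add2l.
apply: (wt_pos Hk); apply: phi_ne.
move=> E; move: (congr1 size E); rewrite size_take size_drop /=.
case: ifP => _; lia.
Qed.

Definition Fb E := (E * k ^ E).+1 * (E * k ^ E).+1 * E.+1 * E.+1.

Lemma tail_bound (E T : nat) (al0 Q : seq B) :
  (forall t, T < t -> t <= size al0 -> exists X Y, [/\ size X <= E, size Y <= E,
      Nv k (phi g (take t al0) ++ X) = Nv k (phi g Q ++ Y)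
    & mv (phi g (take t al0) ++ X) = mv (phi g Q ++ Y)]) ->
  size al0 <= T + Fb E.
Proof.
move=> H.
case: (leqP (size al0) T) => hT; first exact: leq_trans hT (leq_addr _ _).
pose ps := [seq phi g (take t al0) | t <- iota T.+1 (size al0 - T)].
have : size ps <= Fb E.
  apply: (count_bound Hk (Q := phi g Q)).
  - rewrite -map_comp map_inj_in_uniq ?iota_uniq // => t1 t2.
    rewrite !mem_iota => /andP [a1 b1] /andP [a2 b2] /= [e1 e2].
    case: (ltngtP t1 t2) => // h.
    + have W : t2 <= size al0 by lia.
      by have := wt_take h W; rewrite /wt e1 e2 ltnn.
    + have W : t1 <= size al0 by lia.
      by have := wt_take h W; rewrite /wt e1 e2 ltnn.
  - move=> p /mapP [t]; rewrite mem_iota => /andP [a b] ->.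
    apply: H; lia.
rewrite size_map size_iota; lia.
Qed.

Definition cw (c : option B) := oapp (fun x => [:: x]) [::] c.

Lemma lmult_len c (M : dfa (option B * option B)%type) :
  (forall w, dfa_accepts M w <-> Lmult R g L c w) ->
  forall al be, Lmult R g L c (pad al be) ->
  size al <= size be + Fb (#|dfa_state M| * cmax) /\
  size be <= size al + Fb (#|dfa_state M| * cmax).
Proof.
move=> HM al be H.
have fel : forall t, exists r r', [/\ size r < #|dfa_state M|, size r' < #|dfa_state M|
   & pcong R (phi g (take t al ++ r ++ cw c)) (phi g (take t be ++ r'))].
  move=> t; move/HM: H; rewrite /dfa_accepts -(cat_take_drop t (pad al be)) foldl_cat => Hf.
  have [z [hz Hz]] := short_cont (leqnn _) Hf.
  have : Lmult R g L c (take t (pad al be) ++ z) by apply/HM; rewrite /dfa_accepts foldl_cat.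
  case=> al' [be' [_ _ Hp E]].
  have [r [r' [e1 e2 h1 h2]]] := pad_prefix E.
  exists r, r'; split; try exact: leq_ltn_trans hz.
  by move: Hp; rewrite e1 e2 -catA.
have szc : forall r, size r < #|dfa_state M| -> size (phi g (r ++ cw c)) <= #|dfa_state M| * cmax.
  move=> r hr; apply: leq_trans (size_phi _) _; apply: leq_mul => //.
  by rewrite size_cat; case: c {fel HM H} => [x|] /=; rewrite ?addn1 ?addn0 // ltnW.
have szr : forall r, size r < #|dfa_state M| -> size (phi g r) <= #|dfa_state M| * cmax.
  move=> r hr; apply: leq_trans (size_phi _) _; apply: leq_mul => //; exact: ltnW.
split.
- apply: (tail_bound (Q := be)) => t h1 h2.
  have [r [r' [hr hr' pc]]] := fel t.
  rewrite (take_oversize (ltnW h1)) in pc.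
  have pc' : pcong R (phi g (take t al) ++ phi g (r ++ cw c)) (phi g be ++ phi g r') by rewrite -!phi_cat.
  have [e1 e2] := pcong_val pc'.
  exists (phi g (r ++ cw c)), (phi g r'); split; [exact: szc|exact: szr|exact: e1|exact: e2].
- apply: (tail_bound (Q := al)) => t h1 h2.
  have [r [r' [hr hr' pc]]] := fel t.
  rewrite (take_oversize (ltnW h1)) in pc.
  have pc' : pcong R (phi g (take t be) ++ phi g r') (phi g al ++ phi g (r ++ cw c)) by rewrite -!phi_cat; apply: pcong_sym.
  have [e1 e2] := pcong_val pc'.
  exists (phi g r'), (phi g (r ++ cw c)); split; [exact: szr|exact: szc|exact: e1|exact: e2].
Qed.

End Str.

Section Neg.
Variable k : nat.
Hypothesis Hk : 1 < k.
Local Notation R := (relk k).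
Variables (B : finType) (g : B -> seq ab) (L : seq B -> Prop).
Hypothesis gne : forall x, g x <> [::].
Hypothesis Lne : forall al, L al -> al <> [::].
Hypothesis surj : forall w : seq ab, w <> [::] -> exists al, L al /\ pcong R (phi g al) w.

Let Hk0 : 0 < k. Proof. exact: ltnW. Qed.

Lemma letter y : exists x, L [:: x] /\ pcong R (g x) [:: y].
Proof.
have [al [Hal pc]] := surj (w := [:: y]) ltac:(done).
have [e1 e2] := pcong_val pc.
have := wt_phi Hk0 gne al; rewrite /wt e1 e2.
case: al Hal pc {e1 e2} => [/Lne //|x [|x2 al]] Hal pc.
- by exists x; rewrite phi1 in pc.
- by case: y {pc} => /=; rewrite ?muln0.
Qed.

Lemma stepL x y (M : dfa (option B * option B)%type) :
  (forall w, dfa_accepts M w <-> Lmult R g L (Some x) w) ->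
  pcong R (g x) [:: y] ->
  forall v u, L v -> pcong R (phi g v) u ->
  exists v', [/\ L v', pcong R (phi g v') (u ++ [:: y]),
    size v <= size v' + Fb k (#|dfa_state M| * cmax g) &
    size v' <= size v + Fb k (#|dfa_state M| * cmax g)].
Proof.
move=> HM gx v u Hv pc.
have [v' [Hv' pc']] := surj (w := u ++ [:: y]) ltac:(by case: u {pc}).
have Hm : Lmult R g L (Some x) (pad v v').
  exists v, v'; split => //.
  rewrite /= phi_cat phi1.
  apply: pcong_trans (pcong_catl (g x) pc) _.
  apply: pcong_trans (pcong_catr u gx) _.
  exact: pcong_sym.
have [h1 h2] := lmult_len Hk0 gne HM Hm.
by exists v'.
Qed.

End Neg.

Lemma neg_main k (Hk : 1 < k) (B : finType) (g : B -> seq ab) (L : seq B -> Prop) :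
  auto_struct (relk k) g L -> False.
Proof.
case=> [[gne _] Lne _ surj regM].
have Hk0 : 0 < k by exact: ltnW.
have [xa [Lxa gxa]] := letter Hk gne Lne surj La.
have [xb [Lxb gxb]] := letter Hk gne Lne surj Lb.
have [Ma HMa] := regM (Some xa).
have [Mb HMb] := regM (Some xb).
have [M0 HM0] := regM None.
set D := Fb k (#|dfa_state Ma| * cmax g) + Fb k (#|dfa_state Mb| * cmax g) + Fb k (#|dfa_state M0| * cmax g).
have hDa : Fb k (#|dfa_state Ma| * cmax g) <= D by rewrite /D; lia.
have hDb : Fb k (#|dfa_state Mb| * cmax g) <= D by rewrite /D; lia.
have hD0 : Fb k (#|dfa_state M0| * cmax g) <= D by rewrite /D; lia.
clearbody D.
have key : forall j, k ^ j.+1 <= cmax g * (1 + (2 * j + 4) * D).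
  move=> j.
  set K := k ^ j.+1.
  have K0 : 0 < K by rewrite expn_gt0 Hk0.
  have [v0 [Hv0 pc0]] := surj (nseq K La) ltac:(by case: (K) K0).
  have chainV : forall i, exists v, [/\ L v, pcong (relk k) (phi g v) (nseq K La ++ nseq i Lb)
       & size v0 <= size v + i * D].
    elim=> [|i [v [Hv pcv hv]]]; first by exists v0; split => //=; [rewrite cats0 | rewrite mul0n addn0].
    have [v' [Hv' pc' h1 _]] := stepL Hk gne surj HMb gxb Hv pcv.
    exists v'; split => //; first by rewrite nseqS1 catA.
    have h1D := leq_trans h1 (leq_add (leqnn (size v')) hDb).
    rewrite mulSn; lia.
  have chainZ : forall i, exists z, [/\ L z, pcong (relk k) (phi g z) (nseq i.+1 Lb)
       & size z <= 1 + i * D].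
    elim=> [|i [z [Hz pcz hz]]]; first by exists [:: xb]; rewrite phi1.
    have [z' [Hz' pc' _ h2]] := stepL Hk gne surj HMb gxb Hz pcz.
    exists z'; split => //; first by rewrite [nseq i.+2 _]nseqS1.
    have h2D := leq_trans h2 (leq_add (leqnn (size z)) hDb).
    rewrite mulSn; lia.
  have [z [Hz pcz hz]] := chainZ j.
  have [z' [Hz' pcz' _ h2]] := stepL Hk gne surj HMa gxa Hz pcz.
  have [v [Hv pcv hv]] := chainV j.+1.
  have Hm : Lmult (relk k) g L None (pad v z').
    exists v, z'; split => //.
    rewrite /= cats0.
    apply: pcong_trans pcv _.
    apply: pcong_trans (pcong_sym (bm_a k j.+1)) _.
    exact: pcong_sym.
  have [h3 _] := lmult_len Hk0 gne HM0 Hm.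
  have [e1 e2] := pcong_val pc0.
  have hK : K <= size (phi g v0).
    have := Nv_bound Hk0 (phi g v0).
    rewrite e1 e2.
    have -> : Nv k (nseq K La) = K by elim: (K) => //= n ->.
    have -> : mv (nseq K La) = 0 by elim: (K).
    by rewrite expn0 muln1.
  have h4 := size_phi g v0.
  have h2D := leq_trans h2 (leq_add (leqnn (size z)) hDa).
  have h3D := leq_trans h3 (leq_add (leqnn (size z')) hD0).
  nia.
set C := cmax g.
set p := C * (3 * D + 1) + 4 * C * D + 1.
have := key (p.*2).-1.
have p0 : 0 < p.*2 by rewrite /p; lia.
rewrite prednK // -muln2 expnM expnS expn1.
have := ltn_expl p Hk.
set X := k ^ p => hX.
have hX2 : p.+1 * p.+1 <= X * X by apply: leq_mul.
rewrite /p in hX2 *.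
nia.
Qed.


Theorem theorem3p1p9 (k : nat) :
  prefix_automatic (relk k) <-> (k <= 1)%N.
Proof.
split; last exact: pos.
move=> [B [g [L [HA _]]]].
case: (leqP k 1) => // Hk.
exfalso; exact: (neg_main Hk HA).
Qed.
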